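(* In the transactional panorama model described in the context, if every read transaction is answered so as to maintain consistency-committed ($C_c$), i.e., each read transaction returns the states of its views from the most recently committed version of the view graph, then the resulting sequence of read transactions also maintains monotonicity and visibility.
   Context: A view graph is a directed acyclic graph on a fixed set $N$ of nodes (source data and views); there is an edge $n_j \to n_i$ if view $n_i$ takes $n_j$ as input, and the dependents of a node are the nodes reachable from it. The view graph is multi-versioned. Write transactions $w^{t_1},\dots,w^{t_n}$ (timestamps $t_1<\dots<t_n$, starting from an initial version $G^{t_0}$) each modify some source nodes and must recompute their dependents; they are processed one at a time in timestamp order. Write transaction $w^{t_i}$ creates version $G^{t_i}=(E,N,V^{t_i})$, where for each node $n_k$ the set $V^{t_i}$ contains: the result $v_k^{t_i}$ if $w^{t_i}$ updates $n_k$ and has already computed it; a placeholder $UC_k^{t_i}$ (''under computation'') if $w^{t_i}$ updates $n_k$ but has not yet computed it; or the result of $n_k$ from the previous version if $w^{t_i}$ does not update $n_k$. A version is committed once all its new results have been computed (and its commit is recorded); the most recently committed version contains no UCs. The timestamp of a returned state is the timestamp of the version it belongs to. Read transactions $r^{s_1},\dots,r^{s_m}$ ($s_1<\dots<s_m$) each read the set of views in the user's current viewport (a subset of $N$, which may change between reads) and return immediately, without waiting, a set $H^{s_i}$ containing one state (a view result or a UC) per view read. Monotonicity: for any view $n_k$ read by two transactions $r^{s_i}, r^{s_j}$ with $s_i<s_j$, returning states with timestamps $t_p$ and $t_q$, we have $t_p \le t_q$. Visibility: no $H^{s_i}$ contains a UC. Consistency: for each $r^{s_i}$ there is a version $G^{t_j}=(E,N,V^{t_j})$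 with $t_j\le s_i$ and $H^{s_i}\subseteq V^{t_j}$. *)

(* Defs.v *)
From mathcomp Require Import all_boot.
Set Implicit Arguments. Unset Strict Implicit. Unset Printing Implicit Defensive.

(* A state of a node in some version: either a computed result, or a
   placeholder UC ("under computation").  Each state carries the timestamp
   of the version it belongs to (the version whose write produced it). *)
Inductive state (Val : Type) : Type :=
  | Res of nat & Val
  | UC of nat.

Definition state_ts (Val : Type) (x : state Val) : nat :=
  match x with Res t _ => t | UC t => t end.

Definition is_UC (Val : Type) (x : state Val) : bool :=
  if x is UC _ then true else false.

Definition acyclic (N : finType) (E : rel N) : Prop :=
  forall x y, E x y -> ~~ connect E y x.

(* Content of version i (timestamp t i) of node k, observed at time tau.
   Version i >= 1 is created by write w^{t_i}, which updates the nodes in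
   upd i; node k in upd i has been computed by time tau iff comp i k <= tau,
   in which case its value is val i k; nodes not updated carry the state of
   the previous version. *)
Fixpoint vstate (N : finType) (Val : Type) (t : nat -> nat) (init : N -> Val)
    (upd : nat -> {set N}) (comp : nat -> N -> nat) (val : nat -> N -> Val)
    (i tau : nat) (k : N) : state Val :=
  match i with
  | 0 => Res (t 0) (init k)
  | i'.+1 =>
      if k \in upd i then
        (if comp i k <= tau then Res (t i) (val i k) else UC Val (t i))
      else vstate t init upd comp val i' tau k
  end.

Definition last_committed (n : nat) (commit : nat -> nat) (tau : nat) : nat :=
  \max_(i < n.+1 | commit i <= tau) i.

(* Main.v *)
Require Import Defs.
From mathcomp Require Import all_boot.

Lemma vts_indep (N : finType) (Val : Type) t (init : N -> Val) upd comp val i tau tau' k :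
  state_ts (vstate t init upd comp val i tau k) = state_ts (vstate t init upd comp val i tau' k).
Proof.
elim: i => [|i IH] //=.
case: (k \in upd i.+1) => //.
by case: (comp i.+1 k <= tau); case: (comp i.+1 k <= tau').
Qed.

Theorem theorem2p4
  (N : finType) (E : rel N) (Val : Type)
  (* write side: versions 0..n *)
  (n : nat) (t : nat -> nat) (init : N -> Val)
  (upd : nat -> {set N}) (comp : nat -> N -> nat) (val : nat -> N -> Val)
  (commit : nat -> nat)
  (* read side: read transactions 1..m *)
  (m : nat) (s : nat -> nat) (vp : nat -> {set N})
  (H : nat -> N -> state Val)
  (* the view graph is a DAG *)
  (hE : acyclic E)
  (* write timestamps strictly increasing *)
  (ht : forall i, i < n -> t i < t i.+1)
  (* each write updates a set of nodes closed under dependents *)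
  (hupd : forall i x y, 1 <= i <= n -> x \in upd i -> E x y -> y \in upd i)
  (* the initial version is committed at t_0 *)
  (hc0 : commit 0 = t 0)
  (* writes processed one at a time in timestamp order *)
  (hcmono : forall i, 1 <= i <= n -> commit i.-1 < commit i)
  (* a version is created at its timestamp, and committed only once all its
     new results have been computed *)
  (hcomp : forall i k, 1 <= i <= n -> k \in upd i ->
             t i <= comp i k /\ comp i k <= commit i)
  (* read timestamps strictly increasing, all reads after t_0 *)
  (hs : forall j, 1 <= j < m -> s j < s j.+1)
  (hs1 : t 0 <= s 1)
  (* C_c: each read returns the states of its views from the most recently
     committed version at its timestamp *)
  (hCc : forall j k, 1 <= j <= m -> k \in vp j ->
           H j k = vstate t init upd comp val
                     (last_committed n commit (s j)) (s j) k) :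
  (* monotonicity *)
  (forall j1 j2 k, 1 <= j1 <= m -> 1 <= j2 <= m -> s j1 < s j2 ->
     k \in vp j1 -> k \in vp j2 ->
     state_ts (H j1 k) <= state_ts (H j2 k))
  /\
  (* visibility *)
  (forall j k, 1 <= j <= m -> k \in vp j -> ~~ is_UC (H j k)).
Proof.
have tmono : forall i j, i <= j -> j <= n -> t i <= t j.
  move=> i j lij ljn; elim: j lij ljn => [|j IH] lij ljn.
    by rewrite leqn0 in lij; rewrite (eqP lij).
  case: (ltngtP i j.+1) lij => // [lt _|-> _ //].
  apply: leq_trans (IH lt (ltnW ljn)) (ltnW (ht j ljn)).
have cmono : forall i j, i <= j -> j <= n -> commit i <= commit j.
  move=> i j lij ljn; elim: j lij ljn => [|j IH] lij ljn.
    by rewrite leqn0 in lij; rewrite (eqP lij).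
  case: (ltngtP i j.+1) lij => // [lt _|-> _ //].
  apply: leq_trans (IH lt (ltnW ljn)) (ltnW (hcmono j.+1 ljn)).
have smono : forall j, 1 <= j <= m -> s 1 <= s j.
  move=> j; elim: j => [|j IH] // /andP [_ hj].
  case: j IH hj => [//|j] IH hj.
  apply: leq_trans (IH _) (ltnW (hs j.+1 _)); apply/andP; split => //.
  exact: ltnW.
have LP : forall tau, t 0 <= tau ->
    commit (last_committed n commit tau) <= tau /\ last_committed n commit tau <= n.
  move=> tau htau; rewrite /last_committed.
  apply: (big_ind (fun x => commit x <= tau /\ x <= n)).
  - by rewrite hc0.
  - move=> x y hx hy; rewrite /maxn; by case: ifP.
  - by move=> i hi; split => //; rewrite -ltnS.
have Lmono : forall tau tau', tau <= tau' ->
    last_committed n commit tau <= last_committed n commit tau'.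
  move=> tau tau' le; apply/bigmax_leqP => i hi.
  by apply: (leq_bigmax_cond i); apply: leq_trans hi le.
have vis : forall i tau k, i <= n -> commit i <= tau ->
    ~~ is_UC (vstate t init upd comp val i tau k).
  move=> i tau k; elim: i => [|i IH] //= hi hc.
  case: ifP => hk.
    have [_ h2] := hcomp i.+1 k hi hk.
    by rewrite (leq_trans h2 hc).
  apply: IH; first exact: ltnW.
  exact: leq_trans (ltnW (hcmono i.+1 hi)) hc.
have tsle : forall i tau k, i <= n -> state_ts (vstate t init upd comp val i tau k) <= t i.
  move=> i tau k; elim: i => [|i IH] //= hi.
  case: ifP => _; first by case: ifP.
  exact: leq_trans (IH (ltnW hi)) (ltnW (ht i hi)).
have vmono : forall i i' tau k, i <= i' -> i' <= n ->
    state_ts (vstate t init upd comp val i tau k) <= state_ts (vstate t init upd comp val i' tau k).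
  move=> i i' tau k; elim: i' => [|i' IH] lij ljn.
    by rewrite leqn0 in lij; rewrite (eqP lij).
  case: (ltngtP i i'.+1) lij => // [lt _|-> _ //].
  rewrite /=; case: ifP => _.
    have h : state_ts (vstate t init upd comp val i tau k) <= t i'.+1.
      apply: leq_trans (tsle _ _ _ _) (tmono _ _ (ltnW lt) ljn).
      exact: leq_trans (ltnW lt) ljn.
    by case: ifP.
  exact: IH lt (ltnW ljn).
have sj : forall j, 1 <= j <= m -> t 0 <= s j.
  by move=> j hj; apply: leq_trans hs1 (smono j hj).
split.
  move=> j1 j2 k h1 h2 lt k1 k2; rewrite (hCc _ _ h1 k1) (hCc _ _ h2 k2).
  rewrite (vts_indep _ _ _ _ _ _ _ _ (s j1) (s j2)).
  apply: vmono; first exact: Lmono (ltnW lt).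
  by case: (LP _ (sj _ h2)).
move=> j k hj hk; rewrite (hCc _ _ hj hk).
have [h1 h2] := LP _ (sj _ hj).
exact: vis.
Qed.
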